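(* Let $\{\varphi_i\}_{i=1}^N\subset S^{d-1}$ be a frame for $\mathbb{R}^d$ with frame operator $S_\Phi=\sum_{i=1}^N\varphi_i\varphi_i^\top$, and let $\{\psi_i\}_{i=1}^N$ be a dual frame to it (i.e. $x=\sum_i\langle x,\varphi_i\rangle\psi_i$ for all $x\in\mathbb{R}^d$). For each $i$ let $z_i=\psi_i-S_\Phi^{-1}\varphi_i$, and let $a:=\min_{i\ne j}\langle\varphi_i,S_\Phi^{-1}(\varphi_i-\varphi_j)\rangle$. If $\max_j\|z_j\|\le a/N$, then the identity permutation is the optimal permutation $\sigma$ for the mass transport problem between $\frac1N\sum_i\delta_{\varphi_i}$ and $\frac1N\sum_i\delta_{\psi_i}$, i.e. it minimizes $\frac1N\sum_{i=1}^N\|\varphi_i-\psi_{\sigma(i)}\|^2$ over all permutations $\sigma$ of $\{1,\dots,N\}$.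
   Context: $S^{d-1}$ is the unit sphere in $\mathbb{R}^d$. A finite frame is a finite spanning set of $\mathbb{R}^d$. *)

(* Defs.v *)
From HB Require Import structures.
From mathcomp Require Import all_boot all_order all_algebra all_fingroup.
Set Implicit Arguments. Unset Strict Implicit. Unset Printing Implicit Defensive.
Import Order.TTheory GRing.Theory Num.Theory.
Local Open Scope ring_scope.

Definition dotv (R : nzRingType) (d : nat) (u v : 'cV[R]_d) : R := (u^T *m v) 0 0.

Definition normv (R : rcfType) (d : nat) (u : 'cV[R]_d) : R := Num.sqrt (dotv u u).

(* A finite family spans R^d: the N x d matrix with rows phi_i^T has full row space *)
Definition is_frame (R : fieldType) (d N : nat) (phi : 'I_N -> 'cV[R]_d) : Prop :=
  row_full (\matrix_(i < N, k < d) phi i k 0).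

Definition frame_op (R : nzRingType) (d N : nat) (phi : 'I_N -> 'cV[R]_d) : 'M[R]_d :=
  \sum_(i < N) phi i *m (phi i)^T.

Definition is_dual_frame (R : nzRingType) (d N : nat) (phi psi : 'I_N -> 'cV[R]_d) : Prop :=
  forall x : 'cV[R]_d, x = \sum_(i < N) dotv x (phi i) *: psi i.

Definition transport_cost (R : rcfType) (d N : nat) (phi psi : 'I_N -> 'cV[R]_d)
  (s : 'S_N) : R :=
  N%:R^-1 * \sum_(i < N) normv (phi i - psi (s i)) ^+ 2.

(* Main.v *)
Require Import Defs.
From HB Require Import structures.
From mathcomp Require Import all_boot all_order all_algebra all_fingroup.
From mathcomp Require Import ring lra zify.
Import Order.TTheory GRing.Theory Num.Theory.
Local Open Scope ring_scope.

Section S.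
Variables (R : rcfType) (d : nat).
Implicit Types u v w : 'cV[R]_d.

Lemma dotvE u v : dotv u v = \sum_k u k 0 * v k 0.
Proof. by rewrite /dotv !mxE; apply: eq_bigr => k _; rewrite mxE. Qed.

Lemma dotvC u v : dotv u v = dotv v u.
Proof. by rewrite !dotvE; apply: eq_bigr => k _; rewrite mulrC. Qed.

Lemma dotvDr u v w : dotv u (v + w) = dotv u v + dotv u w.
Proof. by rewrite !dotvE -big_split; apply: eq_bigr => k _; rewrite mxE mulrDr. Qed.

Lemma dotvNr u v : dotv u (- v) = - dotv u v.
Proof. by rewrite !dotvE -sumrN; apply: eq_bigr => k _; rewrite mxE mulrN. Qed.

Lemma dotvZr u v (t : R) : dotv u (t *: v) = t * dotv u v.
Proof. by rewrite !dotvE mulr_sumr; apply: eq_bigr => k _; rewrite mxE mulrCA. Qed.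

Lemma dotvBr u v w : dotv u (v - w) = dotv u v - dotv u w.
Proof. by rewrite dotvDr dotvNr. Qed.

Lemma dotvBl u v w : dotv (v - w) u = dotv v u - dotv w u.
Proof. by rewrite dotvC dotvBr !(dotvC u). Qed.

Lemma dotvDl u v w : dotv (v + w) u = dotv v u + dotv w u.
Proof. by rewrite dotvC dotvDr !(dotvC u). Qed.

Lemma dotvZl u v (t : R) : dotv (t *: v) u = t * dotv v u.
Proof. by rewrite dotvC dotvZr dotvC. Qed.

Lemma dotv_ge0 u : 0 <= dotv u u.
Proof. by rewrite dotvE; apply: sumr_ge0 => k _; rewrite -expr2 sqr_ge0. Qed.

Lemma normv_sqr u : normv u ^+ 2 = dotv u u.
Proof. by rewrite /normv sqr_sqrtr // dotv_ge0. Qed.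

Lemma normv_ge0 u : 0 <= normv u.
Proof. exact: sqrtr_ge0. Qed.

Lemma normvN u : normv (- u) = normv u.
Proof. by rewrite /normv dotvNr dotvC dotvNr opprK. Qed.

Lemma dotv_lb p w : normv p = 1 -> - normv w <= dotv p w.
Proof.
move=> hp.
have hp2 : dotv p p = 1 by rewrite -normv_sqr hp expr1n.
set c := dotv p w; set n := normv w.
have hn : 0 <= n := normv_ge0 w.
have h := dotv_ge0 ((- c) *: p + w).
rewrite dotvDl !dotvDr !dotvZl !dotvZr hp2 -/c (dotvC w p) -/c in h.
have hw : dotv w w = n ^+ 2 by rewrite normv_sqr.
rewrite hw in h.
nra.
Qed.
End S.

Theorem mainTheorem10 (R : rcfType) (d N : nat)
  (phi psi : 'I_N -> 'cV[R]_d)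
  (hunit : forall i, normv (phi i) = 1)
  (hframe : is_frame phi)
  (hdual : is_dual_frame phi psi) :
  let Sinv := invmx (frame_op phi) in
  let z := fun i => psi i - Sinv *m phi i in
  (* max_j ||z_j|| <= a / N, with a = min_{i<>k} <phi_i, S^{-1}(phi_i - phi_k)> *)
  (forall j i k : 'I_N, i != k ->
     normv (z j) <= dotv (phi i) (Sinv *m (phi i - phi k)) / N%:R) ->
  forall s : 'S_N, transport_cost phi psi 1 <= transport_cost phi psi s.
Proof.
move=> Sinv z hz s.
have key i : dotv (phi i) (psi (s i)) <= dotv (phi i) (psi i).
  have [e|ne] := eqVneq (s i) i; first by rewrite e.
  have hN : (2 <= N)%N.
    have h1 := ltn_ord i; have h2 := ltn_ord (s i).
    have : (nat_of_ord (s i) != nat_of_ord i) by [].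
    move: h1 h2; move: (nat_of_ord (s i)) (nat_of_ord i) => a b h1 h2 h3.
    lia.
  have hNR : 2%:R <= N%:R :> R by rewrite ler_nat.
  have hpsi j : psi j = Sinv *m phi j + z j by rewrite /z addrC subrK.
  set A := dotv (phi i) (Sinv *m (phi i - phi (s i))).
  have h1 := hz i i (s i) (ltac:(by rewrite eq_sym)).
  have h2 := hz (s i) i (s i) (ltac:(by rewrite eq_sym)).
  have l1 := @dotv_lb _ _ _ (z i) (hunit i).
  have l2 := @dotv_lb _ _ _ (- z (s i)) (hunit i).
  rewrite normvN dotvNr in l2.
  have g1 := @normv_ge0 _ _ (z i).
  have g2 := @normv_ge0 _ _ (z (s i)).
  have eqA : A = dotv (phi i) (Sinv *m phi i) - dotv (phi i) (Sinv *m phi (s i)).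
    by rewrite /A mulmxBr dotvBr.
  have ej j : dotv (phi i) (psi j) = dotv (phi i) (Sinv *m phi j) + dotv (phi i) (z j).
    by rewrite /z dotvBr; ring.
  rewrite !ej.
  have hN0 : N%:R != 0 :> R by rewrite pnatr_eq0; lia.
  have eAx : A = A / N%:R * N%:R by rewrite divfK.
  rewrite -/A in h1 h2.
  move: h1 h2 eAx; set x := A / N%:R => h1 h2 eAx.
  have hx : 0 <= x by apply: le_trans h1.
  have : 0 <= A - normv (z i) - normv (z (s i)).
    have : A - 2 * x = x * (N%:R - 2) by rewrite {1}eAx; ring.
    have : 0 <= x * (N%:R - 2) by apply: mulr_ge0 => //; rewrite subr_ge0.
    lra.
  move: eqA l1 l2; lra.
rewrite /transport_cost; apply: ler_wpM2l; first by rewrite invr_ge0 ler0n.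
have E (t : 'S_N) : \sum_(i < N) normv (phi i - psi (t i)) ^+ 2 =
   \sum_i dotv (phi i) (phi i) - 2 * \sum_i dotv (phi i) (psi (t i))
   + \sum_i dotv (psi i) (psi i).
  rewrite [X in _ = _ + X](reindex_inj (@perm_inj _ t)) /= mulr_sumr -sumrB -big_split /=.
  apply: eq_bigr => i _.
  rewrite normv_sqr dotvBl !dotvBr (@dotvC _ _ (psi (t i)) (phi i)); ring.
rewrite !E; apply: lerD => //; apply: lerB => //.
rewrite ler_pM2l //; apply: ler_sum => i _; rewrite perm1; exact: key.
Qed.
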